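(* Let $\{(\phi^n,\mu^n,R^n)\}$ be generated by Scheme 1A and set $M:=R^0=\sqrt{E[\phi_{in}]}$. Then for all $n\ge 0$: $0<R^{n+1}\le R^n\le M$, and $0<\xi^{n+1}\le \frac{M}{\sqrt{c_0}}$.
   Context: Standing setup: $\Omega\subset\mathbb{R}^d$ ($d=2,3$) is a bounded domain with smooth boundary and outward unit normal $\mathbf{n}$; $\|\cdot\|_0$ is the $L^2(\Omega)$ norm. Let $\lambda\ge 0$, $H(s)=\frac14(s^2-1)^2$, $h(s)=s^3-s$. Fix $c_0>0$ and define $E[\phi]=\int_\Omega\big(\tfrac12|\nabla\phi|^2+\tfrac{\lambda}{2}\phi^2+H(\phi)\big)dx+c_0$ (so $E[\phi]\ge c_0$). Time step $\Delta t>0$. Set $\phi^0=\phi_{in}$, $\mu^0=-\Delta\phi^0+\lambda\phi^0+h(\phi^0)$, $R^0=\sqrt{E[\phi^0]}$. Scheme 1A: for $n\ge0$, $\frac{\phi^{n+1}-\phi^n}{\Delta t}=\Delta\mu^{n+1}$, $\mu^{n+1}=-\Delta\phi^{n+1}+\lambda\phi^{n+1}+|\xi^{n+1}|^2h(\phi^n)$, $\frac{R^{n+1}-R^n}{\Delta t}=-\frac{\xi^{n+1}}{2\sqrt{E[\phi^n]}}\int_\Omega|\nabla\mu^n|^2dx$, with $\xi^{n+1}=R^{n+1}/\sqrt{E[\phi^n]}$, and $\nabla\phi^{n+1}\cdot\mathbf{n}=\nabla\mu^{n+1}\cdot\mathbf{n}=0$ on $\partial\Omega$. *)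

(* Defs.v *)
From HB Require Import structures.
From mathcomp Require Import all_boot all_order all_algebra.
From mathcomp Require Import all_classical all_reals all_analysis.
Set Implicit Arguments. Unset Strict Implicit. Unset Printing Implicit Defensive.
Import Order.TTheory GRing.Theory Num.Theory.
Import numFieldNormedType.Exports.
Local Open Scope classical_set_scope.
Local Open Scope ring_scope.

Section Scheme1A.
Variable R : realType.

Definition ebasis (d : nat) (i : 'I_d) : 'rV[R]_d := delta_mx 0 i.

Definition pd (d : nat) (i : 'I_d) (f : 'rV[R]_d -> R) : 'rV[R]_d -> R :=
  fun x => 'D_(ebasis i) f x.

Definition grad (d : nat) (f : 'rV[R]_d -> R) (x : 'rV[R]_d) : 'rV[R]_d :=
  \row_i pd i f x.

Definition lap (d : nat) (f : 'rV[R]_d -> R) (x : 'rV[R]_d) : R :=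
  \sum_(i < d) pd i (pd i f) x.

Definition dotv (d : nat) (u v : 'rV[R]_d) : R := \sum_(i < d) u 0 i * v 0 i.
Definition sqnorm (d : nat) (u : 'rV[R]_d) : R := dotv u u.

(* Lebesgue integral over R^d, written as the iterated one-dimensional
   Lebesgue integrals (Fubini) *)
Fixpoint iint (d : nat) : ('rV[R]_d -> R) -> R :=
  match d return ('rV[R]_d -> R) -> R with
  | 0 => fun f => f 0
  | d'.+1 => fun f =>
      Rintegral (@lebesgue_measure R) setT
        (fun t : R => iint (fun v : 'rV[R]_d' => f (row_mx (const_mx t : 'rV[R]_1) v)))
  end.

Definition intO (d : nat) (Omega : set 'rV[R]_d) (f : 'rV[R]_d -> R) : R :=
  iint (fun x => \1_Omega x * f x).

Definition Hpot (s : R) : R := (s ^+ 2 - 1) ^+ 2 / 4.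
Definition hpot (s : R) : R := s ^+ 3 - s.

Definition Energy (d : nat) (Omega : set 'rV[R]_d) (lam c0 : R)
  (phi : 'rV[R]_d -> R) : R :=
  intO Omega (fun x => sqnorm (grad phi x) / 2 + lam / 2 * phi x ^+ 2
                       + Hpot (phi x)) + c0.

Definition bdry (d : nat) (Omega : set 'rV[R]_d) : set 'rV[R]_d :=
  closure Omega `\` interior Omega.

End Scheme1A.

(* Main.v *)
Require Import Defs.
From HB Require Import structures.
From mathcomp Require Import all_boot all_order all_algebra.
From mathcomp Require Import all_classical all_reals all_analysis.
From mathcomp Require Import ring lra.
Import Order.TTheory GRing.Theory Num.Theory.
Import numFieldNormedType.Exports.
Local Open Scope classical_set_scope.
Local Open Scope ring_scope.

Lemma iint_ge0 (R : realType) (d : nat) (f : 'rV[R]_d -> R) :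
  (forall x, 0 <= f x) -> 0 <= iint f.
Proof.
elim: d f => [|d IH] f hf /=; first exact: hf.
apply: Rintegral_ge0 => t _; exact: IH.
Qed.

Lemma intO_ge0 (R : realType) (d : nat) (Omega : set 'rV[R]_d) (f : 'rV[R]_d -> R) :
  (forall x, 0 <= f x) -> 0 <= intO Omega f.
Proof.
move=> hf; apply: iint_ge0 => x; apply: mulr_ge0 => //.
Qed.

Lemma sqnorm_ge0 (R : realType) (d : nat) (u : 'rV[R]_d) : 0 <= sqnorm u.
Proof. by apply: sumr_ge0 => i _; rewrite -expr2 sqr_ge0. Qed.

Lemma Energy_ge (R : realType) (d : nat) (Omega : set 'rV[R]_d) (lam c0 : R)
  (phi : 'rV[R]_d -> R) : 0 <= lam -> c0 <= Energy Omega lam c0 phi.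
Proof.
move=> hl; rewrite /Energy lerDr; apply: intO_ge0 => x.
rewrite /Hpot; apply: addr_ge0; last by apply: divr_ge0; [rewrite sqr_ge0|].
apply: addr_ge0; first by apply: divr_ge0 => //; exact: sqnorm_ge0.
by apply: mulr_ge0; [apply: divr_ge0|rewrite sqr_ge0].
Qed.

Theorem mainTheorem2 (R : realType) (d : nat) (Omega : set 'rV[R]_d)
  (nrm : 'rV[R]_d -> 'rV[R]_d) (lam c0 dt : R)
  (phi_in : 'rV[R]_d -> R)
  (phi mu : nat -> 'rV[R]_d -> R) (Rs : nat -> R) :
  (d = 2%N \/ d = 3%N) ->
  open Omega -> bounded_set Omega -> connected Omega -> Omega !=set0 ->
  (forall x, bdry Omega x -> sqnorm (nrm x) = 1) ->
  0 <= lam -> 0 < c0 -> 0 < dt ->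
  let E := Energy Omega lam c0 in
  let xi := fun n : nat => Rs n.+1 / Num.sqrt (E (phi n)) in
  phi 0%N = phi_in ->
  (forall x, Omega x ->
     mu 0%N x = - lap (phi 0%N) x + lam * phi 0%N x + hpot (phi 0%N x)) ->
  Rs 0%N = Num.sqrt (E (phi 0%N)) ->
  (forall n x, Omega x ->
     (phi n.+1 x - phi n x) / dt = lap (mu n.+1) x) ->
  (forall n x, Omega x ->
     mu n.+1 x = - lap (phi n.+1) x + lam * phi n.+1 x
                 + (xi n) ^+ 2 * hpot (phi n x)) ->
  (forall n, (Rs n.+1 - Rs n) / dt =
     - (xi n / (2 * Num.sqrt (E (phi n))))
       * intO Omega (fun x => sqnorm (grad (mu n) x))) ->
  (forall n x, bdry Omega x ->
     dotv (grad (phi n.+1) x) (nrm x) = 0 /\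
     dotv (grad (mu n.+1) x) (nrm x) = 0) ->
  let M := Rs 0%N in
  forall n : nat,
    (0 < Rs n.+1 /\ Rs n.+1 <= Rs n /\ Rs n <= M) /\
    (0 < xi n /\ xi n <= M / Num.sqrt c0).
Proof.
move=> _ _ _ _ _ _ hl hc hdt E xi _ _ hR0 _ _ hrec _ M.
have hS : forall n, Num.sqrt c0 <= Num.sqrt (E (phi n)).
  move=> n; rewrite ler_sqrt; [exact: (@Energy_ge R d Omega lam c0 (phi n) hl)|exact: (le_trans (ltW hc) (@Energy_ge R d Omega lam c0 (phi n) hl))].
have hc' : 0 < Num.sqrt c0 by rewrite sqrtr_gt0.
have hSp : forall n, 0 < Num.sqrt (E (phi n)).
  by move=> n; apply: lt_le_trans (hS n).
have step : forall n, 0 < Rs n -> 0 < Rs n.+1 /\ Rs n.+1 <= Rs n.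
  move=> n hpos.
  set S := Num.sqrt (E (phi n)).
  set I := intO Omega (fun x => sqnorm (grad (mu n) x)).
  have hI : 0 <= I by apply: intO_ge0 => x; exact: sqnorm_ge0.
  have hS0 : 0 < S := hSp n.
  set a := dt * I / (2 * S * S).
  have ha : 0 <= a.
    rewrite /a; apply: divr_ge0; first by apply: mulr_ge0 => //; exact: ltW.
    by apply: ltW; rewrite !mulr_gt0.
  have key : Rs n.+1 * (1 + a) = Rs n.
    have h := hrec n; rewrite -/S -/I /xi -/S in h.
    have hdt0 : dt != 0 by rewrite gt_eqF.
    have hS00 : S != 0 by rewrite gt_eqF.
    move: h; rewrite /a => h.
    have h2 : Rs n.+1 - Rs n = - (Rs n.+1 / S / (2 * S)) * I * dt.
      by rewrite -h mulfVK.
    apply/eqP; rewrite -subr_eq0; apply/eqP.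
    have -> : Rs n.+1 * (1 + dt * I / (2 * S * S)) - Rs n =
      (Rs n.+1 - Rs n) + Rs n.+1 * (dt * I / (2 * S * S)) by ring.
    rewrite h2; field; by rewrite hS00.
  have h1a : 0 < 1 + a by lra.
  have hR1 : Rs n.+1 = Rs n / (1 + a) by rewrite -key mulfK // gt_eqF.
  split; first by rewrite hR1 divr_gt0.
  rewrite hR1 ler_pdivrMr //; nra.
have main : forall n, 0 < Rs n /\ Rs n <= M.
  elim=> [|n [IH1 IH2]]; first by split => //; rewrite hR0 sqrtr_gt0;
    apply: lt_le_trans hc _; exact: (@Energy_ge R d Omega lam c0 (phi 0%N) hl).
  have [s1 s2] := step n IH1; split => //; exact: le_trans s2 IH2.
move=> n; have [m1 m2] := main n; have [s1 s2] := step n m1.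
split; first by split => //; split.
split; first by rewrite /xi divr_gt0.
rewrite /xi ler_pdivrMr //.
apply: le_trans (le_trans s2 m2) _.
have hM : 0 <= M / Num.sqrt c0 by apply: divr_ge0; [exact: (le_trans (ltW m1) m2)|exact: ltW].
apply: (le_trans _ (ler_wpM2l hM (hS n))).
by rewrite divfK // gt_eqF.
Qed.
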